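(* Let $L$ be a finite lattice, $\varphi\in M_1(L)$, and $a_1,\dots,a_n\in L$ with $n\ge2$. If $a_n\le a_i$ for some $i\le n-1$, then $\Lambda_{a_1,\ldots,a_n}\varphi=\Lambda_{a_1,\ldots,a_{n-1}}\varphi$.
   Context: $L$ is a finite lattice with join $\vee$. $M_1(L)$ is the set of nonnegative monotone real functions on $L$. A path from $a$ to $b$ is a sequence $H=(h_0,\dots,h_m)$ of distinct elements of $L$ with $h_0=a$, $h_m=b$ ($m\ge0$); $\varphi(H)=\sum_{i=0}^m\varphi(h_i)-\sum_{i=1}^m\varphi(h_{i-1}\vee h_i)$; $\lambda(\varphi;a,b)=\max\{\varphi(H): H\text{ a path from }a\text{ to }b\}$. The $\lambda$-difference operator is $\Lambda_a\varphi(x)=\varphi(x)-\lambda(\varphi;a,x)$; it maps $M_1(L)$ into itself. Successive $\lambda$-differences are $\Lambda_{a_1,\ldots,a_n}\varphi=\Lambda_{a_n}(\Lambda_{a_1,\ldots,a_{n-1}}\varphi)$. *)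

(* Defs.v *)
From mathcomp Require Import all_boot all_order all_algebra.
From mathcomp Require Import reals.
Set Implicit Arguments. Unset Strict Implicit. Unset Printing Implicit Defensive.
Import Order.TTheory GRing.Theory Num.Theory.
Local Open Scope ring_scope.
Local Open Scope order_scope.

Section LambdaDiff.
Variables (d : Order.disp_t) (L : finLatticeType d) (R : realType).

Definition M1 (phi : L -> R) : Prop :=
  (forall x, (0 <= phi x)%R) /\ (forall x y : L, x <= y -> (phi x <= phi y)%R).

Definition pathval (phi : L -> R) (h : L) (hs : seq L) : R :=
  (\sum_(x <- h :: hs) phi x - \sum_(p <- zip (h :: hs) hs) phi (p.1 `|` p.2))%R.

Definition pathvalS (phi : L -> R) (s : seq L) : R :=
  if s is h :: hs then pathval phi h hs else 0%R.

Definition is_path (a b : L) (s : seq L) : bool :=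
  [&& uniq s, head a s == a, last a s == b & size s != 0%N].

(* A path has
   distinct elements, hence length m+1 <= #|L|; we range over all tuples of
   such lengths.  The initial value is the value of a genuine path
   ([a] if a = b, [a;b] otherwise), so it does not change the maximum. *)
Definition lambda (phi : L -> R) (a b : L) : R :=
  \big[Num.max/pathvalS phi (if a == b then [:: a] else [:: a; b])]_(m < #|L|)
    \big[Num.max/pathvalS phi (if a == b then [:: a] else [:: a; b])]_(t : (m.+1).-tuple L | is_path a b t)
       pathvalS phi t.

Definition Lam (a : L) (phi : L -> R) : L -> R := fun x => (phi x - lambda phi a x)%R.

Definition Lams (s : seq L) (phi : L -> R) : L -> R := foldl (fun f a => Lam a f) phi s.

End LambdaDiff.

(* Main.v *)
Require Import Defs.
From mathcomp Require Import all_boot all_order all_algebra.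
From mathcomp Require Import reals.
From mathcomp Require Import ring lra.
From Stdlib Require Import FunctionalExtensionality.
Import Order.TTheory GRing.Theory Num.Theory.
Local Open Scope order_scope.

Set Implicit Arguments. Unset Strict Implicit.
Section H.
Variables (d : Order.disp_t) (L : finLatticeType d) (R : realType).
Local Open Scope ring_scope.
Implicit Types (phi : L -> R).

Definition mono phi := forall x y : L, (x <= y)%O -> phi x <= phi y.

Lemma pv_nil phi h : pathval phi h [::] = phi h.
Proof. by rewrite /pathval big_cons big_nil /= big_nil subr0 addr0. Qed.

Lemma pv_cons phi h h' hs :
  pathval phi h (h' :: hs) = phi h - phi (h `|` h')%O + pathval phi h' hs.
Proof.
rewrite /pathval /= !big_cons /=. ring.
Qed.

Lemma pv_le_head phi h hs : mono phi -> pathval phi h hs <= phi h.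
Proof.
move=> mo; elim: hs h => [|h' hs IH] h; first by rewrite pv_nil.
rewrite pv_cons. have := IH h'. have := mo h' (h `|` h')%O (leUr _ _). lra.
Qed.

Lemma pv_le_last phi h hs : mono phi -> pathval phi h hs <= phi (last h hs).
Proof.
move=> mo; elim: hs h => [|h' hs IH] h; first by rewrite pv_nil.
rewrite pv_cons /=. have := IH h'. have := mo h (h `|` h')%O (leUl _ _). lra.
Qed.

Lemma pv_cat phi h p x q :
  pathval phi h (p ++ x :: q) = pathval phi h (rcons p x) + pathval phi x q - phi x.
Proof.
elim: p h => [|h' p IH] h /=.
  rewrite !pv_cons pv_nil. ring.
rewrite !pv_cons IH. ring.
Qed.

Lemma pv_rcons phi h p x :
  pathval phi h (rcons p x) = pathval phi h p + phi x - phi (last h p `|` x)%O.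
Proof.
elim: p h => [|h' p IH] h /=.
  rewrite !pv_cons !pv_nil. ring.
rewrite !pv_cons IH. ring.
Qed.

Lemma bmax_ge (I : finType) (P : pred I) (F : I -> R) (x0 : R) i :
  P i -> F i <= \big[Num.max/x0]_(j | P j) F j.
Proof. by move=> Pi; rewrite (bigD1 i) //= le_max lexx. Qed.

Lemma bmax_le (I : finType) (P : pred I) (F : I -> R) (x0 B : R) :
  x0 <= B -> (forall i, P i -> F i <= B) -> \big[Num.max/x0]_(j | P j) F j <= B.
Proof.
move=> h0 hF; elim/big_rec: _ => // j v Pj hv. by rewrite ge_max hF.
Qed.

Lemma bmax_geT (I : finType) (P : pred I) (F : I -> R) (x0 y : R) (i : I) :
  P i -> y <= F i -> y <= \big[Num.max/x0]_(j | P j) F j.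
Proof. by move=> Pi h; exact: (le_trans h (bmax_ge F x0 Pi)). Qed.

Lemma init_path (a b : L) : is_path a b (if a == b then [:: a] else [:: a; b]).
Proof.
rewrite /is_path; case: eqP => [->|/eqP ne] /=; first by rewrite !eqxx.
by rewrite inE ne !eqxx.
Qed.

Lemma lam_lb phi a b s : is_path a b s -> pathvalS phi s <= lambda phi a b.
Proof.
move=> P; have := P; case/and4P=> u _ _ sz.
set m := (size s).-1.
have Hs : size s == m.+1 by rewrite /m prednK // lt0n.
have Hm : (m < #|L|)%N.
  rewrite /m prednK ?lt0n // -(card_uniqP u); exact: max_card.
rewrite /lambda; apply: (@bmax_geT _ _ _ _ _ (Ordinal Hm)) => //.
have -> : pathvalS phi s = pathvalS phi (Tuple Hs) by [].
exact: (@bmax_ge _ _ (fun t : (m.+1).-tuple L => pathvalS phi t)).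
Qed.

Lemma lam_ub phi a b B : (forall s, is_path a b s -> pathvalS phi s <= B) ->
  lambda phi a b <= B.
Proof.
move=> H; rewrite /lambda; apply: bmax_le; first exact/H/init_path.
move=> m _; apply: bmax_le; first exact/H/init_path.
by move=> t; apply: H.
Qed.


Lemma lam_le_last phi a x : mono phi -> lambda phi a x <= phi x.
Proof.
move=> mo; apply: lam_ub => -[|h hs] /and4P[_ _ /eqP hl _] //=.
rewrite -hl; exact: pv_le_last.
Qed.

Lemma lam_le_head phi a x : mono phi -> lambda phi a x <= phi a.
Proof.
move=> mo; apply: lam_ub => -[|h hs] /and4P[_ /eqP /= hh _ _] //=.
rewrite hh; exact: pv_le_head.
Qed.

Lemma lam_aa phi a : phi a <= lambda phi a a.
Proof.
have := lam_lb phi (s := [:: a]); rewrite /= pv_nil; apply.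
by rewrite /is_path /= eqxx.
Qed.

Lemma lam_ge0 phi a x : M1 phi -> 0 <= lambda phi a x.
Proof.
case=> nn mo.
have [->|neq] := eqVneq a x.
  exact: le_trans (nn x) (lam_aa phi x).
have P2 : is_path a x [:: a; x].
  by rewrite /is_path /= inE !eqxx !andbT.
have [ax|nax] := boolP (a <= x)%O.
  apply: le_trans (lam_lb phi P2); rewrite /= pv_cons pv_nil join_r //.
  have := nn a; lra.
have [xa|nxa] := boolP (x <= a)%O.
  apply: le_trans (lam_lb phi P2); rewrite /= pv_cons pv_nil join_l //.
  have := nn x; lra.
have P3 : is_path a x [:: a; (a `&` x)%O; x].
  rewrite /is_path /= !inE !eqxx /= !andbT (negbTE neq) orbF; apply/andP; split.
  - apply/eqP => e; move: nax; rewrite -(negbK (a <= x)%O) e leIr //.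
  - apply/eqP => e; move: nxa; by rewrite -e leIl.
apply: le_trans (lam_lb phi P3).
rewrite /= !pv_cons pv_nil (join_l (leIl a x)) (join_r (leIr x a)).
have := nn (a `&` x)%O; lra.
Qed.

Lemma lam_mono phi a x y : mono phi -> (x <= y)%O ->
  lambda phi a y <= lambda phi a x + phi y - phi x.
Proof.
move=> mo xy; apply: lam_ub => s Ps.
have := Ps; case/and4P=> u hh hl sz.
have mxy := mo x y xy.
have [xin|xnin] := boolP (x \in s).
  case/splitPr: xin u Ps hh hl sz => p1 p2 u Ps hh hl sz.
  have Pt : is_path a x (rcons p1 x).
    rewrite /is_path last_rcons eqxx size_rcons andbT /=.
    apply/andP; split.
      by move: u; rewrite -cats1 -cat1s catA cat_uniq => /and3P[].
    by case: (p1) hh.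
  have := lam_lb phi Pt.
  case: (p1) => [|h1 q1] /=.
    rewrite pv_nil; have := pv_le_head x p2 mo. lra.
  rewrite pv_cat; have := pv_le_head x p2 mo. lra.
case: s Ps u hh hl sz xnin => [|h hs] // Ps u /eqP hh /eqP hl _ xnin.
have Pt : is_path a x (rcons (h :: hs) x).
  rewrite /is_path rcons_uniq xnin u last_rcons size_rcons eqxx /= andbT.
  by move: hh => /= ->.
move: hh hl => /= hh hl.
have := lam_lb phi Pt; rewrite /= pv_rcons hl (join_l xy).
lra.
Qed.

Lemma M1_Lam phi a : M1 phi -> M1 (Lam a phi).
Proof.
move=> [nn mo]; split => [x|x y xy]; rewrite /Lam.
  have := lam_le_last a x mo; lra.
have := lam_mono a mo xy; lra.
Qed.

End H.

Lemma M1_Lams d (L : finLatticeType d) (R : realType) (s : seq L) (phi : L -> R) :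
  M1 phi -> M1 (Lams s phi).
Proof. elim: s phi => //= b s IH phi H; apply: IH; exact: M1_Lam. Qed.

Lemma Lams_le d (L : finLatticeType d) (R : realType) (s : seq L) (phi : L -> R) y :
  M1 phi -> (Lams s phi y <= phi y)%R.
Proof.
elim: s phi => //= b s IH phi H.
apply: le_trans (IH _ (M1_Lam b H)) _; rewrite /Lam.
have := lam_ge0 b y H; lra.
Qed.

Theorem lemma3p14 (d : Order.disp_t) (L : finLatticeType d) (R : realType)
  (phi : L -> R) (n : nat) (a : nat -> L) :
  M1 phi -> (2 <= n)%N ->
  (exists i, (1 <= i <= n.-1)%N /\ a n <= a i) ->
  Lams [seq a k | k <- iota 1 n] phi = Lams [seq a k | k <- iota 1 n.-1] phi.
Proof.
move=> M hn [i [/andP[i1 iN] ani]].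
have En : n = (n.-1 + 1)%N by rewrite addn1 prednK // (leq_trans _ hn).
rewrite {1}En iotaD map_cat /Lams foldl_cat /= -/(Lams _ phi).
have -> : (1 + n.-1)%N = n by rewrite add1n prednK // (ltn_trans _ hn).
set psi := Lams _ phi.
have Mpsi : M1 psi by exact: M1_Lams.
have Ei : n.-1 = (i + (n.-1 - i))%N by rewrite subnKC.
have Ei1 : i = ((i.-1) + 1)%N by rewrite addn1 prednK.
set chi := Lams [seq a k | k <- iota 1 i.-1] phi.
have Mchi : M1 chi by exact: M1_Lams.
have psiE : psi = Lams [seq a k | k <- iota (1 + i) (n.-1 - i)] (Lam (a i) chi).
  rewrite /psi {1}Ei iotaD map_cat /Lams foldl_cat; congr foldl.
  rewrite {1}Ei1 iotaD map_cat foldl_cat /=.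
  have -> : (1 + i.-1)%N = i by rewrite add1n prednK.
  by [].
have psi0 : psi (a n) = 0%R.
  apply/le_anti/andP; split; last by case: Mpsi.
  rewrite psiE; apply: le_trans (Lams_le _ _ (M1_Lam _ Mchi)) _.
  apply: le_trans (proj2 (M1_Lam (a i) Mchi) _ _ ani) _.
  rewrite /Lam; have := lam_aa chi (a i); lra.
apply: functional_extensionality => x; rewrite /Lam.
have h1 := lam_ge0 (a n) x Mpsi.
have h2 := lam_le_head (a n) x (proj2 Mpsi).
rewrite psi0 in h2; lra.
Qed.
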